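(* Let $m\ge1$, $\xi\ge1$ an integer, $K_1,\dots,K_m>0$, and $\rho\in[0,1]$. The finite-population foraging Markov chain on $\mathcal S=\{\mathbf{x}\in\mathbb{Z}_{\ge0}^m:\sum_ix_i=\xi\}$ has all transition probabilities $A(\mathbf{x}\mid\mathbf{x}')$ strictly positive, and consequently it has a unique stationary distribution $\pi$, which satisfies $\pi(\mathbf{x})>0$ for all $\mathbf{x}\in\mathcal S$.
   Context: Let $\phi_i(u)=\frac{K_i}{K_i+u}$. The state $\mathbf{U}_n=(U_{1,n},\dots,U_{m,n})\in\mathcal S$ records how many of the $\xi$ foragers fly to site $i$ at time $n$. Given $\mathbf{U}_n=\mathbf{x}$, the numbers of successful foragers $V_{i,n}$ are independent with $V_{i,n}\sim\mathrm{Binomial}(x_i,\phi_i(x_i/\xi))$; let $R_n=\sum_iV_{i,n}$. If $R_n=0$ set $q_i=1/m$; otherwise $q_i=\rho\,V_{i,n}/R_n+(1-\rho)/m$. Then $\mathbf{U}_{n+1}-\mathbf{V}_n\sim\mathrm{Multinomial}(\xi-R_n,\mathbf{q})$, i.e. successful foragers return to their site and the $\xi-R_n$ unsuccessful ones are redistributed independently according to $\mathbf q$. $A(\mathbf{x}\mid\mathbf{x}')=\mathbb P[\mathbf{U}_{n+1}=\mathbf{x}\mid\mathbf{U}_n=\mathbf{x}']$. *)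

(* Defs.v *)
From HB Require Import structures.
From mathcomp Require Import all_boot all_order all_algebra.
From mathcomp Require Import reals.
Set Implicit Arguments. Unset Strict Implicit. Unset Printing Implicit Defensive.
Import Order.TTheory GRing.Theory Num.Theory.
Local Open Scope ring_scope.

Section Foraging.
Variable R : realType.

Definition phi (m : nat) (K : 'I_m -> R) (i : 'I_m) (u : R) : R := K i / (K i + u).

Definition binom_pmf (n k : nat) (p : R) : R :=
  ('C(n, k))%:R * p ^+ k * (1 - p) ^+ (n - k).

Definition multinom_pmf (m : nat) (n : nat) (q : 'I_m -> R) (k : 'I_m -> nat) : R :=
  if (\sum_i k i)%N == n then
    (n`!)%:R / (\prod_i (k i)`!)%:R * \prod_i q i ^+ k i
  else 0.

Definition redistrib (m : nat) (rho : R) (v : 'I_m -> nat) (i : 'I_m) : R :=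
  let Rn := (\sum_j v j)%N in
  if Rn == 0%N then 1 / m%:R
  else rho * (v i)%:R / Rn%:R + (1 - rho) / m%:R.

(* A(x | x') = P[U_{n+1} = x | U_n = x'] : sum over the vector V_n = v of
   successful foragers (v_i <= x'_i), of the product of independent binomial
   probabilities times the multinomial probability that U_{n+1} - v = x - v. *)
Definition trans (m xi : nat) (K : 'I_m -> R) (rho : R)
    (x x' : 'I_m -> nat) : R :=
  \sum_(v : {ffun 'I_m -> 'I_xi.+1} | [forall i, (v i <= x' i)%N && (v i <= x i)%N])
    ((\prod_i binom_pmf (x' i) (v i) (phi K i ((x' i)%:R / xi%:R))) *
     multinom_pmf (xi - \sum_i (v i : nat))%N
       (redistrib rho (fun i => nat_of_ord (v i))) (fun i => (x i - v i)%N)).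

End Foraging.

Definition state (m xi : nat) :=
  {x : {ffun 'I_m -> 'I_xi.+1} | (\sum_i (x i : nat))%N == xi}.

Definition stateval (m xi : nat) (x : state m xi) : 'I_m -> nat :=
  fun i => nat_of_ord (val x i).

Definition A (R : realType) (m xi : nat) (K : 'I_m -> R) (rho : R)
    (x x' : state m xi) : R :=
  @trans R m xi K rho (stateval x) (stateval x').

(* pi is a stationary distribution of the kernel P (P x x' = P[next = x | now = x']) *)
Definition is_stationary (R : realType) (T : finType) (P : T -> T -> R) (pi : T -> R) :=
  [/\ forall x, 0 <= pi x, \sum_x pi x = 1 &
      forall x, pi x = \sum_x' P x x' * pi x'].

(* Main.v *)
Require Import Defs.
From HB Require Import structures.
From mathcomp Require Import all_boot all_order all_algebra.
From mathcomp Require Import reals.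
From mathcomp Require Import ring lra zify.
Import Order.TTheory GRing.Theory Num.Theory.
Local Open Scope ring_scope.
Section Markov.
Variable R : realType.
Variables (T : finType) (P : T -> T -> R).
Hypothesis Ppos : forall x y, 0 < P x y.
Hypothesis Pcol : forall y, \sum_x P x y = 1.

Lemma sumP (u : T -> R) : \sum_x \sum_y P x y * u y = \sum_y u y.
Proof.
rewrite exchange_big /=; apply: eq_bigr => y _.
by rewrite -mulr_suml Pcol mul1r.
Qed.

Lemma L1 (u : T -> R) : (forall x, u x <= \sum_y P x y * u y) ->
  forall x, u x = \sum_y P x y * u y.
Proof.
move=> H x.
have H0 : \sum_x (\sum_y P x y * u y - u x) = 0.
  by rewrite sumrB sumP subrr.
have H1 : forall x, true -> 0 <= \sum_y P x y * u y - u x.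
  by move=> z _; rewrite subr_ge0.
have := @psumr_eq0P _ _ predT _ H1 H0 x isT.
by move/eqP; rewrite subr_eq0 => /eqP ->.
Qed.

Lemma L2 (u : T -> R) y0 : (forall x, 0 <= u x) -> (forall x, u x = \sum_y P x y * u y) ->
  0 < u y0 -> forall x, 0 < u x.
Proof.
move=> u0 uP uy0 x; rewrite uP (bigD1 y0) //=.
have h1 : 0 <= \sum_(y | y != y0) P x y * u y.
  by apply: sumr_ge0 => y _; apply: mulr_ge0 => //; apply: ltW.
have h2 : 0 < P x y0 * u y0 by apply: mulr_gt0.
lra.
Qed.

Lemma exists_fix (x0 : T) : exists v : T -> R, (exists y, v y != 0) /\
   forall x, v x = \sum_y P x y * v y.
Proof.
pose n := #|T|.
pose M : 'M[R]_n := \matrix_(i, j) (P (enum_val j) (enum_val i) - (i == j)%:R).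
have hd : \det M = 0.
  rewrite -det_tr; apply/eqP/det0P.
  exists (const_mx 1).
    apply/negP => /eqP /matrixP /(_ 0 (enum_rank x0)); rewrite !mxE => /eqP.
    by rewrite oner_eq0.
  apply/matrixP => i j; rewrite !mxE.
  under eq_bigr do rewrite !mxE mul1r.
  rewrite sumrB.
  have -> : \sum_(k < n) P (enum_val k) (enum_val j) = 1.
    by rewrite -(Pcol (enum_val j)) [RHS](reindex (fun i : 'I_n => enum_val i)) //; apply: onW_bij; apply: enum_val_bij.
  rewrite (bigD1 j) //= big1 => [|k]; last by rewrite eq_sym => /negbTE ->.
  by rewrite addr0 (_ : (j == j) = true) ?subrr //; apply/eqP.
move/eqP/det0P: hd => [w wn0 wM].
exists (fun x => w 0 (enum_rank x)); split.
  have [i wi] : exists i, w 0 i != 0.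
    apply/existsP; apply: contraR wn0; rewrite negb_exists => /forallP H.
    apply/eqP/matrixP => a b; rewrite (ord1 a) mxE; exact/eqP/negbNE/H.
  by exists (enum_val i); rewrite enum_valK.
move=> x; move/matrixP: wM => /(_ 0 (enum_rank x)); rewrite !mxE.
under eq_bigr do rewrite !mxE mulrBr.
rewrite sumrB [X in _ - X](bigD1 (enum_rank x)) //= [X in - (_ + X)]big1; last first.
  by move=> k kn; rewrite (negbTE kn) mulr0.
rewrite (_ : (enum_rank x == enum_rank x) = true) ?mulr1; last by apply/eqP.
rewrite addr0 enum_rankK => /eqP; rewrite subr_eq0 => /eqP <-.
rewrite (reindex (fun i : 'I_n => enum_val i)) /=; last by apply: onW_bij; apply: enum_val_bij.
by apply: eq_bigr => y _; rewrite enum_valK mulrC.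
Qed.


Lemma stat_lin (u : T -> R) : is_stationary P u -> forall x, u x = \sum_y P x y * u y.
Proof. by case=> _ _ H x; rewrite H; apply: eq_bigr => y _. Qed.

Lemma markov_main (x0 : T) : exists pi : T -> R,
    [/\ is_stationary P pi,
        (forall pi' : T -> R, is_stationary P pi' -> forall x, pi' x = pi x) &
        forall x, 0 < pi x].
Proof.
have [v [[y0 vy0] vP]] := exists_fix x0.
pose u x : R := `|v x|.
have u0 : forall x, 0 <= u x by move=> x; apply: normr_ge0.
have uP : forall x, u x = \sum_y P x y * u y.
  apply: L1 => x; rewrite /u {1}vP.
  apply: le_trans (ler_norm_sum _ _ _) _.
  apply: ler_sum => y _; rewrite normrM ger0_norm //; exact: ltW.
have uy0 : 0 < u y0 by rewrite /u normr_gt0.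
have upos := @L2 u y0 u0 uP uy0.
pose s := \sum_x u x.
have s0 : 0 < s.
  rewrite /s (bigD1 y0) //=; have : 0 <= \sum_(x | x != y0) u x by apply: sumr_ge0.
  move: (upos y0); lra.
pose pi x := u x / s.
have pipos : forall x, 0 < pi x by move=> x; apply: divr_gt0.
have piP : forall x, pi x = \sum_y P x y * pi y.
  move=> x; rewrite /pi uP mulr_suml; apply: eq_bigr => y _; by rewrite mulrA.
have pistat : is_stationary P pi.
  split => //; first by move=> x; apply: ltW.
  by rewrite /pi -mulr_suml -/s divff // gt_eqF.
exists pi; split => // pi' st' x.
pose w x := pi' x - pi x.
have wP : forall x, w x = \sum_y P x y * w y.
  move=> z; rewrite /w (@stat_lin pi' st') piP -sumrB; apply: eq_bigr => y _.
  by rewrite mulrBr.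
have ws : \sum_x w x = 0.
  by case: st' => _ h1 _; case: pistat => _ h2 _; rewrite /w sumrB h1 h2 subrr.
pose wp x := Num.max (w x) 0.
have wp0 : forall x, 0 <= wp x by move=> z; rewrite /wp le_max lexx orbT.
have wpP : forall x, wp x = \sum_y P x y * wp y.
  apply: L1 => z; rewrite /wp ge_max; apply/andP; split.
    rewrite wP; apply: ler_sum => y _; apply: ler_wpM2l; first exact: ltW.
    by rewrite le_max lexx.
  apply: sumr_ge0 => y _; apply: mulr_ge0; first exact: ltW.
  by rewrite le_max lexx orbT.
have [y1 wy1|none] := pickP (fun y => 0 < wp y).
  have wpp := @L2 wp y1 wp0 wpP wy1.
  have wpos : forall z, 0 < w z.
    by move=> z; move: (wpp z); rewrite /wp lt_max ltxx orbF.
  exfalso; move: ws; rewrite (bigD1 y1) //=.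
  have : 0 <= \sum_(x | x != y1) w x by apply: sumr_ge0 => z _; apply: ltW.
  move: (wpos y1); lra.
have wn : forall z, 0 <= - w z.
  move=> z; move: (none z) => /= /negbT; rewrite /wp lt_max ltxx orbF -leNgt.
  by rewrite oppr_ge0.
have ws' : \sum_z - w z = 0 by rewrite sumrN ws oppr0.
have := @psumr_eq0P _ _ predT (fun z => - w z) (fun z _ => wn z) ws' x isT.
by rewrite /w => /eqP; rewrite oppr_eq0 subr_eq0 => /eqP.
Qed.

End Markov.
Section Multi.
Variable R : realType.

Lemma shift_sum (H : nat -> R) v0 N n : (v0 + N <= n)%N -> (forall j, (N < j)%N -> H j = 0) ->
 \sum_(a < n.+1) (if (v0 <= a)%N then H (a - v0)%N else 0) = \sum_(j < N.+1) H j.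
Proof.
move=> hn H0.
rewrite -(big_mkord xpredT (fun a => if (v0 <= a)%N then H (a-v0)%N else 0)).
rewrite (big_cat_nat (n := v0)) //; last lia.
rewrite big_nat_cond big1; last first.
  by move=> i /andP[/andP[_ hi] _]; rewrite leqNgt hi.
rewrite Monoid.mul1m; have := big_addn 0 n.+1 v0 xpredT (fun a => if (v0 <= a)%N then H (a - v0)%N else 0) => /(_ 0 +%R) /= ->.
rewrite (eq_big_nat _ _ (F2 := H)); last by move=> i _; rewrite leq_addl addnK.
rewrite (big_cat_nat (n := N.+1)) //; last lia.
have -> : \sum_(N.+1 <= i < n.+1 - v0) H i = 0.
  by rewrite big_nat_cond big1 // => i /andP[/andP[hi _] _]; apply: H0.
by rewrite Monoid.mulm1 big_mkord.

Qed.


Definition fcons (T : finType) m (a : T) (g : {ffun 'I_m -> T}) : {ffun 'I_m.+1 -> T} :=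
  [ffun i => if unlift ord0 i is Some j then g j else a].
Arguments fcons {T m}.

Lemma fcons0 (T : finType) m (a : T) (g : {ffun 'I_m -> T}) : fcons a g ord0 = a.
Proof. by rewrite ffunE unlift_none. Qed.

Lemma fconsS (T : finType) m (a : T) (g : {ffun 'I_m -> T}) j : fcons a g (lift ord0 j) = g j.
Proof. by rewrite ffunE liftK. Qed.

Lemma sum_fcons (T : finType) m (P : pred {ffun 'I_m.+1 -> T}) (F : {ffun 'I_m.+1 -> T} -> R) :
  \sum_(f | P f) F f = \sum_(a : T) \sum_(g | P (fcons a g)) F (fcons a g).
Proof.
rewrite pair_big_dep /=.
rewrite (reindex (fun p : T * {ffun 'I_m -> T} => fcons p.1 p.2)) //.
apply: onW_bij.
exists (fun f : {ffun 'I_m.+1 -> T} => (f ord0, [ffun j => f (lift ord0 j)])).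
  by case=> a g /=; rewrite fcons0; congr (_, _); apply/ffunP => j; rewrite ffunE fconsS.
move=> f; apply/ffunP => i; rewrite ffunE /=.
by case: (unliftP ord0 i) => [j ->|->]; rewrite ?ffunE ?liftK ?unlift_none.
Qed.

Lemma forall_split m (P : pred 'I_m.+1) :
  [forall i, P i] = P ord0 && [forall j, P (lift ord0 j)].
Proof.
apply/forallP/andP => [H|[H0 /forallP H]]; first by split => //; apply/forallP.
by move=> i; case: (unliftP ord0 i) => [j ->|->].
Qed.


Lemma mp_split m N (q : 'I_m.+1 -> R) (k : 'I_m.+1 -> nat) (k' : 'I_m -> nat) :
  (forall j, k (lift ord0 j) = k' j) ->
  multinom_pmf N q k = if (k ord0 + \sum_j k' j == N)%N then
     N`!%:R / ((k ord0)`! * \prod_j (k' j)`!)%:R * (q ord0 ^+ k ord0 * \prod_j q (lift ord0 j) ^+ k' j)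
     else 0.
Proof.
move=> hk; rewrite /multinom_pmf !big_ord_recl.
have -> : (\sum_(i < m) k (lift ord0 i) = \sum_i k' i)%N by apply: eq_bigr => j _; rewrite hk.
have -> : (\prod_(i < m) (k (lift ord0 i))`! = \prod_i (k' i)`!)%N by apply: eq_bigr => j _; rewrite hk.
by rewrite (eq_bigr (fun j => q (lift ord0 j) ^+ k' j)) // => j _; rewrite hk.
Qed.

Lemma multinom_sum m : forall n N (v : 'I_m -> nat) (q : 'I_m -> R), (\sum_i v i + N <= n)%N ->
  \sum_(f : {ffun 'I_m -> 'I_n.+1} | [forall i, v i <= f i]%N)
      multinom_pmf N q (fun i => (f i - v i)%N) = (\sum_i q i) ^+ N.
Proof.
elim: m => [|m IH] n N v q hv.
  rewrite big_ord0 expr0n.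
  rewrite (eq_bigl (pred1 [ffun=> ord0])); last first.
    move=> f /=; apply/forallP/eqP => [_|_ i]; last by case: i.
    by apply/ffunP; case.
  rewrite big_pred1_eq /multinom_pmf !big_ord0.
  by case: N {hv} => [|N] //=; rewrite divr1 mulr1.
rewrite sum_fcons [in RHS]big_ord_recl [in RHS]addrC exprDn.
pose v0 := v ord0; pose v' := fun j => v (lift ord0 j).
pose q0 := q ord0; pose q' := fun j => q (lift ord0 j).
pose H j := (\sum_(i < m) q' i) ^+ (N - j) * q0 ^+ j *+ 'C(N, j).
have hv' : (v0 + \sum_j v' j + N <= n)%N by move: hv; rewrite big_ord_recl.
rewrite -(@shift_sum H v0 N n); last first.
- by move=> j hj; rewrite /H bin_small // mulr0n.
- lia.
apply: eq_bigr => a _.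
rewrite (eq_bigl (fun g : {ffun 'I_m -> 'I_n.+1} => (v0 <= a)%N && [forall j, v' j <= g j]%N)); last first.
  by move=> g; rewrite forall_split /= fcons0; congr (_ && _); apply: eq_forallb => j; rewrite fconsS.
case: (leqP v0 a) => hva; last by rewrite big_pred0.
rewrite /=.
set j := (a - v0)%N.
have E : forall g : {ffun 'I_m -> 'I_n.+1},
   multinom_pmf N q (fun i => (fcons a g i - v i)%N) =
   if (j <= N)%N then q0 ^+ j *+ 'C(N, j) * multinom_pmf (N - j) q' (fun i => (g i - v' i)%N) else 0.
  move=> g; rewrite (@mp_split m N q _ (fun i => (g i - v' i)%N)); last by move=> i; rewrite /= fconsS.
  rewrite /= fcons0 -/j /multinom_pmf.
  case: (leqP j N) => hjN; last first.
    by case: eqP => // he; move: hjN; rewrite -he; lia.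
  have -> : (j + \sum_(i < m) (g i - v' i) == N)%N = (\sum_(i < m) (g i - v' i) == N - j)%N.
    by apply/eqP/eqP; lia.
  case: eqP => _; last by rewrite mulr0.
  rewrite -(bin_fact hjN) !natrM /q0 /q' /=.
  have f1 : (j`!)%:R != 0 :> R by rewrite pnatr_eq0 -lt0n fact_gt0.
  have f2 : ((N - j)`!)%:R != 0 :> R by rewrite pnatr_eq0 -lt0n fact_gt0.
  have f3 : (\prod_i (g i - v' i)`!)%:R != 0 :> R.
    by rewrite pnatr_eq0 -lt0n prodn_gt0 // => i; exact: fact_gt0.
  rewrite -mulr_natr; field.
  by rewrite f1 f3.
rewrite (eq_bigr _ (fun g _ => E g)).
case: (leqP j N) => hjN; last by rewrite big1 // /H bin_small.
rewrite -mulr_sumr IH; last first.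
  change (\sum_(i < m) v' i + (N - j) <= n)%N. move: hv'. set S := (\sum_(i < m) v' i)%N.
  move=> h; apply: leq_trans h; rewrite -addnA; apply: leq_trans (leq_addl v0 _); by rewrite leq_add2l leq_subr.
by rewrite /H -mulrnAr [in RHS]mulrC.
Qed.

End Multi.
Section Forage.
Variable R : realType.

Lemma phi_ge0 m (K : 'I_m -> R) i u : 0 < K i -> 0 <= u -> 0 <= phi K i u.
Proof. by move=> hK hu; rewrite /phi divr_ge0 // ?addr_ge0 // ltW. Qed.

Lemma phi_le1 m (K : 'I_m -> R) i u : 0 < K i -> 0 <= u -> phi K i u <= 1.
Proof.
move=> hK hu; rewrite /phi ler_pdivrMr ?mul1r; last by apply: ltr_wpDr.
by rewrite lerDl.
Qed.

Lemma phi_lt1 m (K : 'I_m -> R) i u : 0 < K i -> 0 < u -> phi K i u < 1.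
Proof.
move=> hK hu; rewrite /phi ltr_pdivrMr ?mul1r; last by apply: addr_gt0.
by rewrite ltrDl.
Qed.

Lemma binom_ge0 n k (p : R) : 0 <= p -> p <= 1 -> 0 <= binom_pmf n k p.
Proof.
move=> h0 h1; rewrite /binom_pmf; apply: mulr_ge0; first apply: mulr_ge0 => //.
- exact: exprn_ge0.
- by apply: exprn_ge0; rewrite subr_ge0.
Qed.

Lemma binom_sum n xi (p : R) : (n <= xi)%N -> \sum_(k < xi.+1) binom_pmf n k p = 1.
Proof.
move=> hn.
transitivity (((1 - p) + p) ^+ n); last by rewrite subrK expr1n.
rewrite exprDn.
rewrite (big_ord_widen xi.+1 (fun i => (1 - p) ^+ (n - i) * p ^+ i *+ 'C(n, i))) //.
rewrite [RHS]big_mkcond; apply: eq_bigr => k _ /=.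
rewrite /binom_pmf; case: ltnP => h; last by rewrite bin_small // mul0r mul0r.
by rewrite -mulr_natl; ring.
Qed.

Lemma redistrib_ge0 m (rho : R) (v : 'I_m -> nat) i : 0 <= rho <= 1 ->
  0 <= redistrib rho v i.
Proof.
move=> /andP[r0 r1]; rewrite /redistrib; case: ifP => _.
  by rewrite divr_ge0.
by apply: addr_ge0; apply: divr_ge0 => //; [apply: mulr_ge0 | rewrite subr_ge0].
Qed.

Lemma redistrib_sum m (rho : R) (v : 'I_m -> nat) : (0 < m)%N ->
  \sum_i redistrib rho v i = 1.
Proof.
move=> m0; have hm : m%:R != 0 :> R by rewrite pnatr_eq0 -lt0n.
rewrite /redistrib; case: eqP => hs.
  rewrite sumr_const card_ord -mulr_natr mul1r -mulr_natr; field; exact: hm.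
rewrite big_split /= sumr_const card_ord -mulr_natr.
rewrite -mulr_suml -mulr_sumr -natr_sum.
have hs' : (\sum_j v j)%:R != 0 :> R by rewrite pnatr_eq0; apply/eqP.
field; by rewrite hm hs'.
Qed.

Lemma multinom_ge0 m n (q : 'I_m -> R) k : (forall i, 0 <= q i) -> 0 <= multinom_pmf n q k.
Proof.
move=> hq; rewrite /multinom_pmf; case: ifP => // _.
apply: mulr_ge0; first by apply: divr_ge0.
by apply: prodr_ge0 => i _; apply: exprn_ge0.
Qed.


Lemma sum_state m xi (x0 : state m xi) (G : {ffun 'I_m -> 'I_xi.+1} -> R) :
  \sum_(x : state m xi) G (val x) = \sum_(f : {ffun 'I_m -> 'I_xi.+1} | (\sum_i (f i : nat) == xi)%N) G f.
Proof.
rewrite [RHS](reindex (fun x : state m xi => val x)) /=.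
  by apply: eq_bigl => x; rewrite (valP x).
exists (insubd x0) => [x _|f hf]; first exact: valKd.
exact: insubdK.
Qed.

Lemma sum_restrict (T : finType) (P Q : pred T) (F : T -> R) :
  (forall f, P f -> ~~ Q f -> F f = 0) ->
  \sum_(f | P f && Q f) F f = \sum_(f | P f) F f.
Proof.
move=> H; rewrite big_mkcond [RHS]big_mkcond; apply: eq_bigr => f _.
by case hP: (P f); case hQ: (Q f) => //=; rewrite H ?hQ.
Qed.

Lemma A_pos m xi (K : 'I_m -> R) rho : (0 < m)%N -> (0 < xi)%N -> (forall i, 0 < K i) ->
  0 <= rho <= 1 -> forall x x' : state m xi, 0 < A K rho x x'.
Proof.
move=> m0 xi0 K0 hr x x'; rewrite /A /trans.
set xs := stateval x'; set ys := stateval x.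
pose v0 : {ffun 'I_m -> 'I_xi.+1} := [ffun => ord0].
have hv0 : forall i, (v0 i : nat) = 0%N by move=> i; rewrite ffunE.
rewrite (bigD1 v0) /=; last by apply/forallP => i; rewrite hv0.
apply: ltr_wpDr.
  apply: sumr_ge0 => v _; apply: mulr_ge0.
    apply: prodr_ge0 => i _; apply: binom_ge0.
      by apply: phi_ge0 => //; apply: divr_ge0.
    by apply: phi_le1 => //; apply: divr_ge0.
  by apply: multinom_ge0 => i; apply: redistrib_ge0.
apply: mulr_gt0.
  apply: prodr_gt0 => i _; rewrite hv0 /binom_pmf bin0 expr0 mulr1 subn0 mul1r.
  case hx: (xs i) => [|n]; first by rewrite expr0 ltr01.
  apply: exprn_gt0; rewrite subr_gt0; apply: phi_lt1 => //.
  by apply: divr_gt0; rewrite ltr0n // hx.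
have sv0 : (\sum_i (v0 i : nat) = 0)%N by rewrite big1.
have sy : (\sum_i (ys i - v0 i) = xi)%N.
  rewrite (eq_bigr ys) => [|i _]; last by rewrite hv0 subn0.
  exact: (eqP (valP x)).
rewrite /multinom_pmf sv0 subn0 sy eqxx.
apply: mulr_gt0.
  by apply: divr_gt0; rewrite ltr0n ?fact_gt0 // prodn_gt0 // => i; exact: fact_gt0.
apply: prodr_gt0 => i _; apply: exprn_gt0.
rewrite /redistrib sv0 eqxx; apply: divr_gt0 => //; by rewrite ltr0n.
Qed.


Lemma A_col m xi (K : 'I_m -> R) rho : (0 < m)%N -> (0 < xi)%N -> (forall i, 0 < K i) ->
  0 <= rho <= 1 -> forall x' : state m xi, \sum_x A K rho x x' = 1.
Proof.
move=> m0 xi0 K0 hr x'; rewrite /A /trans.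
set xs := stateval x'.
have sxs : (\sum_i xs i = xi)%N := eqP (valP x').
pose p i := phi K i ((xs i)%:R / xi%:R).
pose B (v : {ffun 'I_m -> 'I_xi.+1}) := \prod_i binom_pmf (xs i) (v i) (p i).
pose M (v f : {ffun 'I_m -> 'I_xi.+1}) := multinom_pmf (xi - \sum_i (v i : nat))
   (redistrib rho (fun i => nat_of_ord (v i))) (fun i => (f i - v i)%N).
pose V (v : {ffun 'I_m -> 'I_xi.+1}) := [forall i, v i <= xs i]%N.
pose G := (fun f : {ffun 'I_m -> 'I_xi.+1} =>
   \sum_(v : {ffun 'I_m -> 'I_xi.+1} | [forall i, (v i <= xs i) && (v i <= f i)]%N) B v * M v f).
transitivity (\sum_(x : state m xi) G (val x)).
  by [].
rewrite (@sum_state m xi x' G) /G (exchange_big_dep V) /=; last first.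
  by move=> f v _ /forallP h; apply/forallP => i; case/andP: (h i).
transitivity (\sum_(v | V v) B v).
  apply: eq_bigr => v hv; rewrite -mulr_sumr.
  have sv : (\sum_i (v i : nat) <= xi)%N.
    apply: (@leq_trans (\sum_i xs i)%N); last by rewrite sxs.
    by apply: leq_sum => i _; move/forallP: hv => /(_ i).
  suff -> : \sum_(f : {ffun 'I_m -> 'I_xi.+1} | (\sum_i (f i : nat) == xi)%N && [forall i, (v i <= xs i) && (v i <= f i)]%N)
     M v f = 1 by rewrite mulr1.
  rewrite -[RHS](expr1n _ (xi - \sum_i (v i : nat))%N).
  rewrite -(@redistrib_sum m rho (fun i => nat_of_ord (v i)) m0).
  rewrite -(@multinom_sum R m xi (xi - \sum_i (v i : nat))%N (fun i => nat_of_ord (v i))); last first.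
    by rewrite subnKC.
  rewrite -(@sum_restrict _ (fun f : {ffun 'I_m -> 'I_xi.+1} => [forall i, v i <= f i]%N) (fun f : {ffun 'I_m -> 'I_xi.+1} => \sum_i (f i : nat) == xi)%N).
    apply: eq_bigl => f /=; rewrite andbC; congr (_ && _).
    apply: eq_forallb => i; move/forallP: hv => /(_ i) ->; by [].
  move=> f /forallP hf hS; rewrite /multinom_pmf ifN //.
  rewrite sumnB; last by move=> i _; exact: hf.
  have : (\sum_i (v i : nat) <= \sum_i (f i : nat))%N by apply: leq_sum => i _; exact: hf.
  move: hS; move: (\sum_i (v i : nat))%N (\sum_i (f i : nat))%N sv => a b ha hb hab.
  apply/negP => /eqP h; move: hb => /negP; apply; apply/eqP; lia.
have hB : forall v, predT v -> ~~ V v -> B v = 0.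
  move=> v _ /forallPn [i hi]; rewrite /B (bigD1 i) //= /binom_pmf bin_small ?mul0r //.
  by rewrite ltnNge.
transitivity (\sum_v B v); first by rewrite -(@sum_restrict _ predT V B hB).
transitivity (\prod_i \sum_(j : 'I_xi.+1) binom_pmf (xs i) j (p i)).
  by rewrite bigA_distr_bigA.
apply: big1 => i _; apply: binom_sum.
by rewrite /xs /stateval -ltnS.
Qed.

End Forage.

Theorem mainTheorem4 (R : realType) (m xi : nat) (K : 'I_m -> R) (rho : R) :
  (0 < m)%N -> (0 < xi)%N -> (forall i, 0 < K i) -> 0 <= rho <= 1 ->
  (forall x x' : state m xi, 0 < A K rho x x') /\
  exists pi : state m xi -> R,
    [/\ is_stationary (A K rho) pi,
        (forall pi' : state m xi -> R, is_stationary (A K rho) pi' ->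
           forall x, pi' x = pi x) &
        forall x, 0 < pi x].
Proof.
move=> m0 xi0 K0 hr.
have Apos := @A_pos R m xi K rho m0 xi0 K0 hr.
split => //.
pose i0 : 'I_m := Ordinal m0.
pose f0 : {ffun 'I_m -> 'I_xi.+1} := [ffun i => if i == i0 then ord_max else ord0].
have hf0 : (\sum_i (f0 i : nat) == xi)%N.
  rewrite (eq_bigr (fun i => if i == i0 then xi else 0%N)); last first.
    by move=> i _; rewrite ffunE; case: (i == i0).
  by rewrite -big_mkcond big_pred1_eq.
pose x0 : state m xi := exist _ f0 hf0.
exact: (@markov_main R _ _ Apos (@A_col R m xi K rho m0 xi0 K0 hr) x0).
Qed.
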